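(* For every $T\in\mathcal M_{\mathcal G,\Gamma}$, the map $U\mapsto U^{-1}TU$ from $\mathcal A$ (with the weak topology) to $\mathcal M_{\mathcal G,\Gamma}$ (with the topology of the metric $\mathrm m_{\mathcal G,\Gamma}$) is continuous.
   Context: $(X,\Sigma,\mu)$ is a separable Lebesgue space with a non-atomic probability measure $\mu$. $\mathcal A$ is the group of invertible measure-preserving transformations of $X$, two transformations being identified if they agree outside a null set. Fix a countable family $\{A_i\}_{i\in\mathbb N}\subset\Sigma$ that generates $\Sigma$ and is dense in $\Sigma$ (for every $A\in\Sigma$ and $\varepsilon>0$ there is $i$ with $\mu(A_i\triangle A)<\varepsilon$). For $T,S\in\mathcal A$ put $\mathrm d(T,S)=\sum_{i}2^{-i}\big(\mu(TA_i\triangle SA_i)+\mu(T^{-1}A_i\triangle S^{-1}A_i)\big)$ and $\mathrm a(T,S)=\sum_{i,j}2^{-(i+j)}|\mu(TA_i\cap A_j)-\mu(SA_i\cap A_j)|$; the weak topology on $\mathcal A$ is the topology of $\mathrm d$. $\mathcal G$ is a Hausdorff locally compact group with a countable neighborhood base. Fix an at most countable family $\{K_i\}$ of compact subsets of $\mathcal G$ with nonempty interiors whose union contains a set generating $\mathcal G$. An action of $\mathcal G$ is a family $T=\{T^g\}_{g\in\mathcal G}\subset\mathcal A$ with $T^gT^h=T^{gh}$ for all $g,h$ and such that $g\mapsto\mu(T^gA\cap B)$ is continuous for all $A,B\in\Sigma$. For $U\in\mathcal A$ and an action $T$, $U^{-1}TU$ denotes the action $g\mapsto U^{-1}T^gU$.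 $\mathrm d_{\mathcal G}(T,S)=\sum_i 2^{-i}\sup_{g\in K_i}\mathrm d(T^g,S^g)$. Let $\Gamma\subset\mathcal G$ be an unbounded subset (not contained in any compact set). An action $T$ is $\Gamma$-mixing if for all $A,B\in\Sigma$ and $\varepsilon>0$ there is a compact $C\subset\mathcal G$ with $|\mu(T^gA\cap B)-\mu(A)\mu(B)|<\varepsilon$ for all $g\in\Gamma\setminus C$. $\mathcal M_{\mathcal G,\Gamma}$ is the set of all $\Gamma$-mixing actions with the leash metric $\mathrm m_{\mathcal G,\Gamma}(T,S)=\mathrm d_{\mathcal G}(T,S)+\sup_{g\in\Gamma}\mathrm a(T^g,S^g)$. *)

(* Defs.v *)
From HB Require Import structures.
From mathcomp Require Import all_boot all_order all_algebra.
From mathcomp Require Import all_classical all_reals all_analysis.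
Set Implicit Arguments. Unset Strict Implicit. Unset Printing Implicit Defensive.
Import Order.TTheory GRing.Theory Num.Theory.
Import numFieldNormedType.Exports.
Local Open Scope classical_set_scope.
Local Open Scope ring_scope.

Definition symd {X : Type} (A B : set X) : set X := (A `\` B) `|` (B `\` A).

(* A candidate invertible transformation: forward map and (a.e.) inverse map. *)
Record mpt (X : Type) := MPT { fw : X -> X ; bw : X -> X }.

(* image T A of a set under T (= preimage under T^{-1}) and preimage T^{-1} A *)
Definition img {X : Type} (U : mpt X) (A : set X) : set X := bw U @^-1` A.
Definition pre {X : Type} (U : mpt X) (A : set X) : set X := fw U @^-1` A.

Section Defs.
Context {R : realType} {d : measure_display} {X : measurableType d}.
Variable mu : probability X R.

Definition m (A : set X) : R := fine (mu A).

Definition nonatomic : Prop :=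
  forall A : set X, measurable A -> (0 < mu A)%E ->
    exists B, [/\ measurable B, B `<=` A, (0 < mu B)%E & (mu B < mu A)%E].

(* U is an invertible measure-preserving transformation (element of 𝒜),
   with inverse bw U modulo null sets *)
Definition is_ipt (U : mpt X) : Prop :=
  [/\ measurable_fun setT (fw U), measurable_fun setT (bw U),
      (forall A, measurable A -> mu (fw U @^-1` A) = mu A),
      (forall A, measurable A -> mu (bw U @^-1` A) = mu A) &
      ({ae mu, forall x, bw U (fw U x) = x} /\
       {ae mu, forall x, fw U (bw U x) = x})].

Variable Ai : nat -> set X.

Definition dA (U V : mpt X) : \bar R :=
  (\sum_(i <oo) ((2 ^- i) * (m (symd (img U (Ai i)) (img V (Ai i)))
                          + m (symd (pre U (Ai i)) (pre V (Ai i)))))%:E)%E.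

Definition aA (U V : mpt X) : \bar R :=
  (\sum_(i <oo) \sum_(j <oo)
     ((2 ^- (i + j)) * `| m (img U (Ai i) `&` Ai j) - m (img V (Ai i) `&` Ai j) |)%:E)%E.

Section Group.
Context {G : topologicalType}.
Variables (mulG : G -> G -> G) (invG : G -> G) (oneG : G).

Definition is_topological_group : Prop :=
  [/\ (forall a b c, mulG a (mulG b c) = mulG (mulG a b) c),
      (forall a, mulG oneG a = a /\ mulG a oneG = a),
      (forall a, mulG (invG a) a = oneG /\ mulG a (invG a) = oneG),
      continuous (fun p : G * G => mulG p.1 p.2) & continuous invG].

Definition first_countable_space : Prop :=
  forall x : G, exists B : nat -> set G,
    (forall n, nbhs x (B n)) /\ (forall U, nbhs x U -> exists n, B n `<=` U).

Definition gen_subgroup (S : set G) : set G :=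
  [set g | forall H : set G, H oneG -> (forall a b, H a -> H b -> H (mulG a b)) ->
      (forall a, H a -> H (invG a)) -> S `<=` H -> H g].

Definition unbounded (Gamma : set G) : Prop :=
  forall C : set G, compact C -> ~ (Gamma `<=` C).

Definition is_action (T : G -> mpt X) : Prop :=
  [/\ (forall g, is_ipt (T g)),
      (forall g h, {ae mu, forall x, fw (T g) (fw (T h) x) = fw (T (mulG g h)) x}) &
      (forall A B, measurable A -> measurable B ->
          continuous (fun g => m (img (T g) A `&` B)))].

Definition mixing (Gamma : set G) (T : G -> mpt X) : Prop :=
  forall A B, measurable A -> measurable B -> forall eps : R, 0 < eps ->
    exists C : set G, compact C /\
      forall g, Gamma g -> ~ C g -> `| m (img (T g) A `&` B) - m A * m B | < eps.

Variables (Kidx : set nat) (K : nat -> set G).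

Definition dG (T S : G -> mpt X) : \bar R :=
  (\sum_(i <oo | i \in Kidx)
     ((2 ^- i)%:E * ereal_sup [set dA (T g) (S g) | g in K i]))%E.

Definition leash (Gamma : set G) (T S : G -> mpt X) : \bar R :=
  (dG T S + ereal_sup [set aA (T g) (S g) | g in Gamma])%E.

End Group.
End Defs.

Definition conj {X G : Type} (U : mpt X) (T : G -> mpt X) : G -> mpt X :=
  fun g => MPT (fun x => bw U (fw (T g) (fw U x))) (fun x => bw U (bw (T g) (fw U x))).

(* Main.v *)
Require Import Defs.
From HB Require Import structures.
From mathcomp Require Import all_boot all_order all_algebra.
From mathcomp Require Import all_classical all_reals all_analysis.
From mathcomp Require Import ring lra.
Import Order.TTheory GRing.Theory Num.Theory.
Import numFieldNormedType.Exports.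
Local Open Scope classical_set_scope.
Local Open Scope ring_scope.
Section Basic.
Context {R : realType} {d : measure_display} {X : measurableType d}.
Variable mu : probability X R.

Lemma mE A : measurable A -> mu A = (m mu A)%:E.
Proof. by move=> mA; rewrite /m fineK //; apply: fin_num_measure. Qed.

Lemma m_ge0 A : 0 <= m mu A.
Proof. by rewrite /m fine_ge0. Qed.

Lemma m_le1 A : measurable A -> m mu A <= 1.
Proof. by move=> mA; rewrite -lee_fin -mE // probability_le1. Qed.

Lemma m_le A B : measurable A -> measurable B -> A `<=` B -> m mu A <= m mu B.
Proof.
move=> mA mB AB; rewrite -lee_fin -!mE //; apply: le_measure => //; by rewrite inE.
Qed.

Lemma m_U2 A B : measurable A -> measurable B -> m mu (A `|` B) <= m mu A + m mu B.
Proof.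
move=> mA mB; rewrite -lee_fin EFinD -!mE //; last exact: measurableU.
exact: measureU2.
Qed.
End Basic.
Section Symd.
Context {R : realType} {d : measure_display} {X : measurableType d}.
Variable mu : probability X R.
Local Notation D A B := (m mu (symd A B)).

Lemma symd_meas (A B : set X) : measurable A -> measurable B -> measurable (symd A B).
Proof. by move=> mA mB; apply: measurableU; apply: measurableD. Qed.

Lemma symdC (A B : set X) : symd A B = symd B A.
Proof. by rewrite /symd setUC. Qed.

Lemma D_ge0 (A B : set X) : 0 <= D A B.
Proof. exact: m_ge0. Qed.

Lemma m_subU2 (P Q S : set X) : measurable P -> measurable Q -> measurable S ->
  S `<=` P `|` Q -> m mu S <= m mu P + m mu Q.
Proof.
move=> mP mQ mS SPQ; apply: le_trans (m_U2 mu _ _ mP mQ).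
by apply: m_le => //; exact: measurableU.
Qed.

Lemma D_tri (A B C : set X) : measurable A -> measurable B -> measurable C ->
  D A C <= D A B + D B C.
Proof.
move=> mA mB mC; apply: m_subU2; try exact: symd_meas.
move=> x [[Ax nCx]|[Cx nAx]]; have [Bx|nBx] := pselect (B x).
- by right; left.
- by left; left.
- by left; right.
- by right; right.
Qed.

Lemma m_diff_le (P Q : set X) : measurable P -> measurable Q ->
  m mu P - m mu Q <= D P Q.
Proof.
move=> mP mQ; rewrite lerBlDl; apply: m_subU2 => //; first exact: symd_meas.
by move=> x Px; have [Qx|nQx] := pselect (Q x); [left|right; left].
Qed.

Lemma m_absdiff (P Q : set X) : measurable P -> measurable Q ->
  `|m mu P - m mu Q| <= D P Q.
Proof.
move=> mP mQ; rewrite ler_norml m_diff_le // andbT lerNl opprB symdC.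
exact: m_diff_le.
Qed.

Lemma D_cap (A B A' B' : set X) : measurable A -> measurable B ->
  measurable A' -> measurable B' ->
  D (A `&` B) (A' `&` B') <= D A A' + D B B'.
Proof.
move=> mA mB mA' mB'; apply: m_subU2; try exact: symd_meas.
  by apply: symd_meas; apply: measurableI.
move=> x [[[Ax Bx] nx]|[[Ax Bx] nx]].
- have [A'x|nA'x] := pselect (A' x); last by left; left.
  by right; left; split => // B'x; apply: nx.
- have [A_x|nAx] := pselect (A x); last by left; right.
  by right; right; split => // B_x; apply: nx.
Qed.

Lemma D_capl (A A' B : set X) : measurable A -> measurable A' -> measurable B ->
  `|m mu (A `&` B) - m mu (A' `&` B)| <= D A A'.
Proof.
move=> mA mA' mB; apply: le_trans (m_absdiff _ _ (measurableI _ _ mA mB) (measurableI _ _ mA' mB)) _.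
apply: m_le; try (apply: symd_meas; apply: measurableI => //); first exact: symd_meas.
by move=> x [[[? ?] n]|[[? ?] n]]; [left|right]; split => // ?; apply: n.
Qed.

Lemma m_null (N S : set X) : measurable S -> measurable N -> mu N = 0%E ->
  S `<=` N -> m mu S = 0.
Proof.
move=> mS mN N0 SN; apply/eqP; rewrite eq_le m_ge0 andbT.
by rewrite -(@fine0 R) /m -N0 -/(m mu N) m_le.
Qed.

Lemma symdE (A B : set X) : measurable A -> measurable B ->
  D A B = m mu A + m mu B - 2 * m mu (A `&` B).
Proof.
move=> mA mB.
have mAB := measurableI _ _ mA mB.
have mBA := measurableI _ _ mB mA.
have mAdB := measurableD mA mB.
have mBdA := measurableD mB mA.
have fin Y : measurable Y -> (mu Y < +oo)%E by move=> mY; rewrite mE // ltry.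
have e1 : m mu (A `\` B) = m mu A - m mu (A `&` B).
  apply/EFin_inj; rewrite EFinB -(mE mu (A `\` B)) // -(mE mu A) // -(mE mu (A `&` B)) //.
  by rewrite measureD // fin.
have e2 : m mu (B `\` A) = m mu B - m mu (A `&` B).
  apply/EFin_inj; rewrite EFinB -(mE mu (B `\` A)) // -(mE mu B) // -(mE mu (A `&` B)) //.
  by rewrite setIC measureD // fin.
have : D A B = m mu (A `\` B) + m mu (B `\` A).
  apply/EFin_inj; rewrite EFinD -(mE mu (A `\` B)) // -(mE mu (B `\` A)) // -mE; last exact: symd_meas.
  rewrite measureU //.
  by apply/seteqP; split => x // [[? ?] [? ?]].
by rewrite e1 e2 => ->; lra.
Qed.
End Symd.
Section Ipt.
Context {R : realType} {d : measure_display} {X : measurableType d}.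
Variable mu : probability X R.
Local Notation D A B := (m mu (symd A B)).

Lemma ae_ex (P : X -> Prop) : {ae mu, forall x, P x} ->
  exists N, [/\ measurable N, mu N = 0%E & forall x, ~ P x -> N x].
Proof. by case=> N [mN N0 sN]; exists N; split => // x nPx; apply: sN. Qed.

Variable U : mpt X.
Hypothesis hU : is_ipt mu U.

Lemma meas_pre A : measurable A -> measurable (pre U A).
Proof. by case: hU => mf _ _ _ _ mA; have := mf measurableT A mA; rewrite setTI. Qed.

Lemma meas_img A : measurable A -> measurable (img U A).
Proof. by case: hU => _ mf _ _ _ mA; have := mf measurableT A mA; rewrite setTI. Qed.

Lemma m_pre A : measurable A -> m mu (pre U A) = m mu A.
Proof. by case: hU => _ _ p _ _ mA; rewrite /m /pre p. Qed.

Lemma m_img A : measurable A -> m mu (img U A) = m mu A.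
Proof. by case: hU => _ _ _ p _ mA; rewrite /m /img p. Qed.

Lemma D_pre A B : measurable A -> measurable B -> D (pre U A) (pre U B) = D A B.
Proof. by move=> mA mB; rewrite -(m_pre _ (symd_meas _ _ mA mB)). Qed.

Lemma D_img A B : measurable A -> measurable B -> D (img U A) (img U B) = D A B.
Proof. by move=> mA mB; rewrite -(m_img _ (symd_meas _ _ mA mB)). Qed.

Lemma D_preimg A : measurable A -> D (pre U (img U A)) A = 0.
Proof.
move=> mA; case: hU => _ _ _ _ [ae1 _]; have [N [mN N0 sN]] := ae_ex _ ae1.
apply: (m_null mu N _ _ mN N0); first by apply: symd_meas => //; apply: meas_pre; exact: meas_img.
move=> x Hx; apply: sN => e; move: Hx; rewrite /pre /img /preimage /=.
by case=> -[] /=; rewrite e => a b; apply: b.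
Qed.

Lemma D_imgpre A : measurable A -> D (img U (pre U A)) A = 0.
Proof.
move=> mA; case: hU => _ _ _ _ [_ ae2]; have [N [mN N0 sN]] := ae_ex _ ae2.
apply: (m_null mu N _ _ mN N0); first by apply: symd_meas => //; apply: meas_img; exact: meas_pre.
move=> x Hx; apply: sN => e; move: Hx; rewrite /pre /img /preimage /=.
by case=> -[] /=; rewrite e => a b; apply: b.
Qed.

Lemma m_swap Y B : measurable Y -> measurable B ->
  m mu (pre U Y `&` B) = m mu (Y `&` img U B).
Proof.
move=> mY mB.
have mpY := meas_pre _ mY; have miB := meas_img _ mB; have mpiB := meas_pre _ miB.
rewrite -[RHS](m_pre (Y `&` img U B)); last exact: measurableI.
have : `|m mu (pre U (img U B) `&` pre U Y) - m mu (B `&` pre U Y)| <= 0.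
  by rewrite -(D_preimg _ mB); apply: D_capl.
rewrite normr_le0 subr_eq0 => /eqP e.
have -> : pre U (Y `&` img U B) = pre U Y `&` pre U (img U B) by [].
by rewrite [in RHS]setIC e setIC.
Qed.
End Ipt.
Section Series.
Context {R : realType}.

Lemma geo_le (n : nat) : \sum_(i < n) (2 ^- i : R) <= 2.
Proof.
elim: n => [|n IH]; first by rewrite big_ord0.
rewrite big_ord_recl /= expr0 invr1.
under eq_bigr => i _ do rewrite /bump /= add1n exprS invfM.
rewrite -mulr_sumr; lra.
Qed.

Lemma tail_le (N n : nat) :
  \sum_(i < n) (if (N <= i)%N then 2 ^- i else 0 : R) <= 2 * 2 ^- N.
Proof.
elim: N n => [|N IH] n.
  by rewrite expr0 invr1 mulr1 (eq_bigr (fun i : 'I_n => 2 ^- i)) ?geo_le.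
case: n => [|n]; first by rewrite big_ord0 mulr_ge0 // invr_ge0 exprn_ge0.
rewrite big_ord_recl /= add0r.
rewrite (eq_bigr (fun i : 'I_n => 2^-1 * (if (N <= i)%N then 2 ^- i else 0 : R))); last first.
  by move=> i _; rewrite /bump /= add1n ltnS; case: ifP => _; [rewrite exprS invfM|rewrite mulr0].
rewrite -mulr_sumr exprS invfM.
have := IH n; lra.
Qed.
End Series.
Section Series2.
Context {R : realType}.
Local Open Scope ereal_scope.

Lemma series_bound (P : pred nat) (F : nat -> \bar R) (a c M : R) (N : nat) :
  (0 <= a)%R -> (0 <= c)%R -> (0 <= M)%R ->
  (forall i, P i -> 0 <= F i) ->
  (forall i, P i -> F i <= (a * 2 ^- i * M)%:E) ->
  (forall i, P i -> (i < N)%N -> F i <= (a * 2 ^- i * c)%:E) ->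
  \sum_(i <oo | P i) F i <= (a * (2 * c + 2 * M * 2 ^- N))%:E.
Proof.
move=> a0 c0 M0 F0 FM Fc.
have p0 i : (0 <= 2 ^- i :> R)%R by rewrite invr_ge0 exprn_ge0.
apply: lime_le; first by apply: is_cvg_nneseries => n _; exact: F0.
apply: nearW => n.
apply: (@le_trans _ _ (\sum_(0 <= i < n) ((a * (2 ^- i * c + M * (if (N <= i)%N then 2 ^- i else 0)))%:E))).
  rewrite big_mkcond /=; apply: lee_sum => i _.
  case: ifP => Pi; last first.
    by rewrite lee_fin mulr_ge0 // addr_ge0 ?mulr_ge0 //; case: ifP.
  case: (ltnP i N) => iN.
  - apply: le_trans (Fc _ Pi iN) _; rewrite lee_fin -mulrA ler_wpM2l //.
    by rewrite mulr0 addr0.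
  - apply: le_trans (FM i Pi) _; rewrite lee_fin -mulrA ler_wpM2l //.
    by have := p0 i; nra.
rewrite sumEFin lee_fin big_mkord -mulr_sumr ler_wpM2l // big_split /= -mulr_suml -mulr_sumr.
have h1 := geo_le (R := R) n; have h2 := tail_le (R := R) N n.
nra.
Qed.
End Series2.
Section Topo.
Lemma compact_net (G : topologicalType) (C : set G) (Q : nat -> G -> Prop) :
  compact C ->
  (forall g0, C g0 -> exists k, \forall g \near g0, Q k g) ->
  \forall K0 \near \oo, forall g, C g -> exists2 k, (k <= K0)%N & Q k g.
Proof.
move=> /compact_near_coveringP cC loc.
apply: (cC nat (nbhs \oo) (fun K0 g => exists2 k, (k <= K0)%N & Q k g)) => //.
move=> x Cx; have [k Hk] := loc x Cx.
exists (Q k, [set K0 | (k <= K0)%N]) => /=.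
  by split => //; exists k.
by case=> y K0 /= [Qy kK]; exists k.
Qed.

Lemma near_forall_lt (P : nat -> nat -> Prop) N :
  (forall i, (i < N)%N -> \forall K \near \oo, P i K) ->
  \forall K \near \oo, forall i, (i < N)%N -> P i K.
Proof.
elim: N => [|N IH] H; first by apply: nearW => K i.
have h1 := IH (fun i iN => H i (ltnW iN)).
have h2 := H N (ltnSn N).
apply: filterS (filterI h1 h2) => K [HK PK] i; rewrite ltnS leq_eqVlt.
by case/orP => [/eqP ->|/HK].
Qed.
End Topo.

Lemma term_le_series {R : realType} (F : nat -> \bar R) k :
  (forall i, 0 <= F i)%E -> (F k <= \sum_(i <oo) F i)%E.
Proof.
move=> F0; apply: le_trans (nneseries_lim_ge k.+1 (fun n _ _ => F0 n)).
rewrite big_nat_recr //= leeDr //; exact: sume_ge0.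
Qed.

Lemma exists_pow {R : realType} (x : R) : 0 < x -> exists N, 2 ^- N < x.
Proof.
move=> x0.
have hN n : (n%:R : R) <= 2 ^+ n.
  elim: n => [|n IH]; first by rewrite expr0 ler01.
  by rewrite -natr1 exprS; have := exprn_ege1 n (ler1n R 2); lra.
exists (Num.Def.trunc (x^-1)).+1.
rewrite -[x]invrK ltf_pV2 ?posrE ?exprn_gt0 ?invr_gt0 //.
apply: (lt_le_trans (truncnS_gt _)); rewrite !invrK; exact: hN.
Qed.
Section Null.
Context {R : realType} {d : measure_display} {X : measurableType d}.
Variable mu : probability X R.

Lemma ae_intro (P : X -> Prop) N : measurable N -> mu N = 0%E ->
  (forall x, ~ N x -> P x) -> {ae mu, forall x, P x}.
Proof.
move=> mN N0 H; exists N; split => // x nPx; apply: contrapT => nN; apply: nPx; exact: H.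
Qed.

Lemma null_U A B : measurable A -> measurable B -> mu A = 0%E -> mu B = 0%E ->
  mu (A `|` B) = 0%E.
Proof.
exact: null_set_setU.
Qed.

Lemma null_pre U : is_ipt mu U -> forall N, measurable N -> mu N = 0%E -> mu (pre U N) = 0%E.
Proof. by case=> _ _ p _ _ N mN N0; rewrite /pre p. Qed.

Lemma null_img U : is_ipt mu U -> forall N, measurable N -> mu N = 0%E -> mu (img U N) = 0%E.
Proof. by case=> _ _ _ p _ N mN N0; rewrite /img p. Qed.

Lemma conj_ipt U V : is_ipt mu U -> is_ipt mu V ->
  is_ipt mu (MPT (fun x => bw U (fw V (fw U x))) (fun x => bw U (bw V (fw U x)))).
Proof.
move=> hU hV; have hU' := hU; have hV' := hV.
case: hU' => mfU mbU pfU pbU [aU1 aU2]; case: hV' => mfV mbV pfV pbV [aV1 aV2].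
split => /=.
- apply: (measurableT_comp mbU); exact: (measurableT_comp mfV).
- apply: (measurableT_comp mbU); exact: (measurableT_comp mbV).
- move=> A mA; rewrite (_ : _ @^-1` A = pre U (pre V (img U A))) //.
  have m1 := meas_img mu U hU A mA; have m2 := meas_pre mu V hV _ m1.
  by rewrite pfU // pfV // pbU.
- move=> A mA; rewrite (_ : _ @^-1` A = pre U (img V (img U A))) //.
  have m1 := meas_img mu U hU A mA; have m2 := meas_img mu V hV _ m1.
  by rewrite pfU // pbV // pbU.
- have [N1 [mN1 N10 sN1]] := ae_ex _ _ aU2.
  have [N2 [mN2 N20 sN2]] := ae_ex _ _ aV1.
  have [N3 [mN3 N30 sN3]] := ae_ex _ _ aU1.
  have [N4 [mN4 N40 sN4]] := ae_ex _ _ aV2.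
  split.
  + have a1 := meas_pre mu V hV _ mN1; have a2 := meas_pre mu U hU _ a1.
    have a3 := meas_pre mu U hU _ mN2.
    have b1 := null_pre V hV _ mN1 N10; have b2 := null_pre U hU _ a1 b1.
    have b3 := null_pre U hU _ mN2 N20.
    apply: (ae_intro _ (pre U (pre V N1) `|` pre U N2 `|` N3)).
    * by apply: measurableU => //; apply: measurableU.
    * by apply: null_U => //; [apply: measurableU|apply: null_U].
    * move=> x Nx.
      have h1 : fw U (bw U (fw V (fw U x))) = fw V (fw U x).
        by apply: contrapT => h; apply: Nx; left; left; apply: sN1.
      have h2 : bw V (fw V (fw U x)) = fw U x.
        by apply: contrapT => h; apply: Nx; left; right; apply: sN2.
      have h3 : bw U (fw U x) = x.
        by apply: contrapT => h; apply: Nx; right; apply: sN3.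
      by rewrite h1 h2 h3.
  + have a1 := meas_img mu V hV _ mN1; have a2 := meas_pre mu U hU _ a1.
    have a3 := meas_pre mu U hU _ mN4.
    have b1 := null_img V hV _ mN1 N10; have b2 := null_pre U hU _ a1 b1.
    have b3 := null_pre U hU _ mN4 N40.
    apply: (ae_intro _ (pre U (img V N1) `|` pre U N4 `|` N3)).
    * by apply: measurableU => //; apply: measurableU.
    * by apply: null_U => //; [apply: measurableU|apply: null_U].
    * move=> x Nx.
      have h1 : fw U (bw U (bw V (fw U x))) = bw V (fw U x).
        by apply: contrapT => h; apply: Nx; left; left; apply: sN1.
      have h2 : fw V (bw V (fw U x)) = fw U x.
        by apply: contrapT => h; apply: Nx; left; right; apply: sN4.
      have h3 : bw U (fw U x) = x.
        by apply: contrapT => h; apply: Nx; right; apply: sN3.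
      by rewrite h1 h2 h3.
Qed.
End Null.
Section Part1.
Context {R : realType} {d : measure_display} {X : measurableType d}.
Variable mu : probability X R.
Context {G : topologicalType}.
Variable mulG : G -> G -> G.
Variable T : G -> mpt X.
Hypothesis hT : is_action mu mulG T.

Lemma Tipt g : is_ipt mu (T g).
Proof. by case: hT. Qed.

Lemma conj_img U g A : img (conj U T g) A = pre U (img (T g) (img U A)).
Proof. by []. Qed.

Lemma conj_pre U g A : pre (conj U T g) A = pre U (pre (T g) (img U A)).
Proof. by []. Qed.

Lemma conj_cont U : is_ipt mu U -> forall A B, measurable A -> measurable B ->
  (fun g => m mu (img (conj U T g) A `&` B)) =
  (fun g => m mu (img (T g) (img U A) `&` img U B)).
Proof.
move=> hU A B mA mB; apply: funext => g; rewrite conj_img (m_swap mu U hU) //.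
exact: (meas_img mu _ (Tipt g) _ (meas_img mu _ hU _ mA)).
Qed.

Lemma conj_action U : is_ipt mu U -> is_action mu mulG (conj U T).
Proof.
move=> hU; split.
- by move=> g; rewrite /conj; apply: conj_ipt => //; exact: Tipt.
- move=> g h; case: hT => _ hc _.
  have [Nc [mNc Nc0 sNc]] := ae_ex mu _ (hc g h).
  have hU' := hU; case: hU' => _ _ _ _ [_ aU2].
  have [N1 [mN1 N10 sN1]] := ae_ex mu _ aU2.
  have a1 := meas_pre mu _ (Tipt h) _ mN1; have a2 := meas_pre mu U hU _ a1.
  have a3 := meas_pre mu U hU _ mNc.
  have b1 := null_pre mu _ (Tipt h) _ mN1 N10; have b2 := null_pre mu U hU _ a1 b1.
  have b3 := null_pre mu U hU _ mNc Nc0.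
  apply: (ae_intro mu _ (pre U (pre (T h) N1) `|` pre U Nc)).
  + exact: measurableU.
  + exact: null_U.
  + move=> x Nx /=.
    have h1 : fw U (bw U (fw (T h) (fw U x))) = fw (T h) (fw U x).
      by apply: contrapT => e; apply: Nx; left; apply: sN1.
    have h2 : fw (T g) (fw (T h) (fw U x)) = fw (T (mulG g h)) (fw U x).
      by apply: contrapT => e; apply: Nx; right; apply: sNc.
    by rewrite h1 h2.
- move=> A B mA mB; rewrite (conj_cont _ hU _ _ mA mB).
  case: hT => _ _ hc; apply: hc; exact: (meas_img mu U hU).
Qed.

Lemma conj_mixing U Gamma : is_ipt mu U -> mixing mu Gamma T -> mixing mu Gamma (conj U T).
Proof.
move=> hU hM A B mA mB eps e0.
have [C [cC HC]] := hM _ _ (meas_img mu U hU _ mA) (meas_img mu U hU _ mB) eps e0.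
exists C; split => // g Gg nCg.
have := HC g Gg nCg.
rewrite (m_img mu U hU _ mA) (m_img mu U hU _ mB).
have -> // : m mu (img (conj U T g) A `&` B) = m mu (img (T g) (img U A) `&` img U B).
by have := congr1 (fun f => f g) (conj_cont _ hU _ _ mA mB).
Qed.
End Part1.
Section Bounds.
Context {R : realType} {d : measure_display} {X : measurableType d}.
Variable mu : probability X R.
Variable Ai : nat -> set X.
Hypothesis Ai_meas : forall i, measurable (Ai i).
Local Notation D A B := (m mu (symd A B)).

Lemma p2_ge0 i : (0 : R) <= 2 ^- i.
Proof. by rewrite invr_ge0 exprn_ge0. Qed.

Lemma D_le1 (A B : set X) : measurable A -> measurable B -> D A B <= 1.
Proof. by move=> mA mB; apply: m_le1; exact: symd_meas. Qed.

Lemma dA_bound (W1 W2 : mpt X) (c : R) (N : nat) :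
  is_ipt mu W1 -> is_ipt mu W2 -> 0 <= c ->
  (forall j, (j < N)%N -> D (img W1 (Ai j)) (img W2 (Ai j)) +
                         D (pre W1 (Ai j)) (pre W2 (Ai j)) <= c) ->
  (dA mu Ai W1 W2 <= (2 * c + 4 * 2 ^- N)%:E)%E.
Proof.
move=> h1 h2 c0 Hc; rewrite /dA.
have H1 j : D (img W1 (Ai j)) (img W2 (Ai j)) + D (pre W1 (Ai j)) (pre W2 (Ai j)) <= 2.
  by apply: lerD; apply: D_le1; do ?[exact: (meas_img mu _ h1)|exact: (meas_img mu _ h2)|
                                      exact: (meas_pre mu _ h1)|exact: (meas_pre mu _ h2)].
apply: le_trans (series_bound xpredT _ 1 c 2 N _ _ _ _ _ _) _ => //.
- by move=> i _; rewrite lee_fin mulr_ge0 ?p2_ge0 // addr_ge0 // D_ge0.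
- by move=> i _; rewrite lee_fin mul1r ler_wpM2l ?p2_ge0.
- by move=> i _ iN; rewrite lee_fin mul1r ler_wpM2l ?p2_ge0 ?Hc.
- by rewrite lee_fin mul1r; lra.
Qed.
Lemma p2_le1 i : 2 ^- i <= (1 : R).
Proof. by rewrite invf_le1; [apply: exprn_ege1; lra|apply: exprn_gt0; lra]. Qed.

Lemma aA_bound (W1 W2 : mpt X) (eta : R) (N : nat) :
  is_ipt mu W1 -> is_ipt mu W2 -> 0 <= eta -> eta <= 1/2 ->
  (forall i j, (i < N)%N -> (j < N)%N ->
     `| m mu (img W1 (Ai i) `&` Ai j) - m mu (img W2 (Ai i) `&` Ai j) | <= 2 * eta) ->
  (aA mu Ai W1 W2 <= (8 * eta + 12 * 2 ^- N)%:E)%E.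
Proof.
move=> h1 h2 e0 e1 Ht; rewrite /aA.
have t1 i j : `| m mu (img W1 (Ai i) `&` Ai j) - m mu (img W2 (Ai i) `&` Ai j) | <= 1.
  have a1 := m_ge0 mu (img W1 (Ai i) `&` Ai j).
  have a2 := m_ge0 mu (img W2 (Ai i) `&` Ai j).
  have b1 := m_le1 mu _ (measurableI _ _ (meas_img mu _ h1 _ (Ai_meas i)) (Ai_meas j)).
  have b2 := m_le1 mu _ (measurableI _ _ (meas_img mu _ h2 _ (Ai_meas i)) (Ai_meas j)).
  by rewrite ler_norml; apply/andP; split; lra.
have pN := p2_le1 N; have pN0 := p2_ge0 N.
have inner i : (\sum_(j <oo) ((2 ^- (i + j)) *
     `| m mu (img W1 (Ai i) `&` Ai j) - m mu (img W2 (Ai i) `&` Ai j) |)%:E <=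
     (2 ^- i * (2 * (if (i < N)%N then 2 * eta else 1) + 2 * 1 * 2 ^- N))%:E)%E.
  apply: (series_bound xpredT _ (2 ^- i) _ 1 N).
  - exact: p2_ge0.
  - by case: ifP => _; lra.
  - lra.
  - by move=> j _; rewrite lee_fin mulr_ge0 ?p2_ge0.
  - by move=> j _; rewrite lee_fin exprD invfM ler_wpM2l ?mulr_ge0 ?p2_ge0 // t1.
  - move=> j _ jN; rewrite lee_fin exprD invfM ler_wpM2l ?mulr_ge0 ?p2_ge0 //.
    by case: ifP => iN; [exact: Ht|exact: t1].
apply: le_trans (series_bound xpredT _ 1 (4 * eta + 2 * 2 ^- N) 4 N _ _ _ _ _ _) _ => //.
- lra.
- by move=> i _; apply: nneseries_ge0 => n _ _; rewrite lee_fin mulr_ge0 ?p2_ge0.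
- move=> i _; apply: le_trans (inner i) _; rewrite lee_fin mul1r ler_wpM2l ?p2_ge0 //.
  by case: ifP => _; lra.
- move=> i _ iN; apply: le_trans (inner i) _; rewrite lee_fin mul1r ler_wpM2l ?p2_ge0 // iN.
  lra.
- by rewrite lee_fin mul1r; lra.
Qed.
Lemma dA_ge0 (W1 W2 : mpt X) : (0 <= dA mu Ai W1 W2)%E.
Proof.
by apply: nneseries_ge0 => n _ _; rewrite lee_fin mulr_ge0 ?p2_ge0 // addr_ge0 // D_ge0.
Qed.

Lemma dA_le8 (W1 W2 : mpt X) : is_ipt mu W1 -> is_ipt mu W2 ->
  (dA mu Ai W1 W2 <= 8%:E)%E.
Proof.
move=> h1 h2; apply: le_trans (dA_bound W1 W2 2 0 h1 h2 _ _) _.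
- lra.
- by [].
- by rewrite expr0 invr1 lee_fin; lra.
Qed.

Lemma dG_bound (G : topologicalType) (Kidx : set nat) (K : nat -> set G)
    (W1 W2 : G -> mpt X) (b : R) (N : nat) :
  0 <= b ->
  (forall i, Kidx i -> K i !=set0) ->
  (forall g, is_ipt mu (W1 g)) -> (forall g, is_ipt mu (W2 g)) ->
  (forall i g, (i < N)%N -> Kidx i -> K i g -> (dA mu Ai (W1 g) (W2 g) <= b%:E)%E) ->
  (dG mu Ai Kidx K W1 W2 <= (2 * b + 16 * 2 ^- N)%:E)%E.
Proof.
move=> b0 Kne h1 h2 Hb; rewrite /dG.
have sup0 i : Kidx i -> (0 <= ereal_sup [set dA mu Ai (W1 g) (W2 g) | g in K i])%E.
  move=> Ki; have [g Kg] := Kne i Ki.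
  apply: le_trans (dA_ge0 (W1 g) (W2 g)) _; apply: ereal_sup_ubound; by exists g.
apply: le_trans (series_bound (fun i => i \in Kidx) _ 1 b 8 N _ _ _ _ _ _) _.
- lra.
- exact: b0.
- lra.
- move=> i /set_mem Ki; apply: mule_ge0; [by have := p2_ge0 i; rewrite -lee_fin|exact: sup0].
- move=> i /set_mem Ki; rewrite mul1r EFinM; apply: lee_pmul; [by have := p2_ge0 i; rewrite -lee_fin|exact: sup0|exact: lexx|].
  by apply: ge_ereal_sup => _ [g _ <-]; apply: dA_le8.
- move=> i /set_mem Ki iN; rewrite mul1r EFinM; apply: lee_pmul; [by have := p2_ge0 i; rewrite -lee_fin|exact: sup0|exact: lexx|].
  by apply: ge_ereal_sup => _ [g Kg <-]; exact: (Hb i g iN Ki Kg).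
- by rewrite lee_fin mul1r; lra.
Qed.
End Bounds.
Section Part2.
Context {R : realType} {d : measure_display} {X : measurableType d}.
Variable mu : probability X R.
Variable Ai : nat -> set X.
Hypothesis Ai_meas : forall i, measurable (Ai i).
Hypothesis Ai_dense : forall A : set X, measurable A -> forall eps : R, 0 < eps ->
      exists i, m mu (symd (Ai i) A) < eps.
Context {G : topologicalType}.
Variable mulG : G -> G -> G.
Variable T : G -> mpt X.
Hypothesis hT : is_action mu mulG T.
Local Notation D A B := (m mu (symd A B)).

Lemma Tipt2 g : is_ipt mu (T g).
Proof. by case: hT. Qed.

Lemma near_gen (Y : G -> set X) (mY : forall g, measurable (Y g)) (c : R)
   (Yc : forall g, m mu (Y g) = c) g0
   (hc : continuous (fun g => m mu (Y g `&` Y g0))) (e : R) :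
   0 < e -> \forall g \near g0, D (Y g) (Y g0) < e.
Proof.
move=> e0.
have e2 : 0 < e / 2 by lra.
have H := @cvgr_dist_lt _ _ _ _ (nbhs_filter g0) (fun g => m mu (Y g `&` Y g0)) _ (hc g0) _ e2.
apply: filterS H => g /=; rewrite setIid ltr_norml => /andP [h1 h2].
rewrite symdE // !Yc; have := Yc g0; lra.
Qed.

Lemma local_dense (Y : G -> set X) (mY : forall g, measurable (Y g))
   (hn : forall (g0 : G) (e : R), 0 < e -> \forall g \near g0, D (Y g) (Y g0) < e)
   (eta : R) : 0 < eta -> forall g0 : G, exists k, \forall g \near g0, D (Y g) (Ai k) < eta.
Proof.
move=> e0 g0.
have e2 : 0 < eta / 2 by lra.
have [k hk] := Ai_dense _ (mY g0) _ e2.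
exists k; apply: (@filterS _ _ (nbhs_filter g0) _ _ _ (hn g0 _ e2)) => g hg.
have := D_tri mu _ _ _ (mY g) (mY g0) (Ai_meas k); rewrite (symdC (Y g0)); lra.
Qed.

Variable U : mpt X.
Hypothesis hU : is_ipt mu U.

Definition Y1 j g := img (T g) (img U (Ai j)).
Definition Y2 j g := pre (T g) (img U (Ai j)).

Lemma mY1 j g : measurable (Y1 j g).
Proof. exact: (meas_img mu _ (Tipt2 g) _ (meas_img mu _ hU _ (Ai_meas j))). Qed.

Lemma mY2 j g : measurable (Y2 j g).
Proof. exact: (meas_pre mu _ (Tipt2 g) _ (meas_img mu _ hU _ (Ai_meas j))). Qed.

Lemma near_Y1 j g0 (e : R) : 0 < e -> \forall g \near g0, D (Y1 j g) (Y1 j g0) < e.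
Proof.
apply: (near_gen (Y1 j) (mY1 j) (m mu (Ai j))).
- by move=> g; rewrite /Y1 (m_img mu _ (Tipt2 g)) ?(m_img mu _ hU) //; exact: (meas_img mu _ hU).
- by case: hT => _ _ hc; apply: hc; [exact: (meas_img mu _ hU)|exact: mY1].
Qed.

Lemma near_Y2 j g0 (e : R) : 0 < e -> \forall g \near g0, D (Y2 j g) (Y2 j g0) < e.
Proof.
apply: (near_gen (Y2 j) (mY2 j) (m mu (Ai j))).
- by move=> g; rewrite /Y2 (m_pre mu _ (Tipt2 g)) ?(m_img mu _ hU) //; exact: (meas_img mu _ hU).
- have -> : (fun g => m mu (Y2 j g `&` Y2 j g0)) =
            (fun g => m mu (img (T g) (Y2 j g0) `&` img U (Ai j))).
    apply: funext => g; rewrite /Y2 (m_swap mu _ (Tipt2 g)).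
    - by rewrite setIC.
    - exact: (meas_img mu _ hU).
    - exact: mY2.
  by case: hT => _ _ hc; apply: hc; [exact: mY2|exact: (meas_img mu _ hU)].
Qed.

Lemma est_gen (S : set X -> set X)
  (mS : forall A, measurable A -> measurable (S A))
  (iS : forall A B, measurable A -> measurable B -> D (S A) (S B) = D A B)
  V (hV : is_ipt mu V) A k (eta : R) : measurable A ->
  D (S (img U A)) (Ai k) < eta ->
  D (pre U (Ai k)) (pre V (Ai k)) < eta ->
  D (img U A) (img V A) < eta ->
  D (pre U (S (img U A))) (pre V (S (img V A))) < 4 * eta.
Proof.
move=> mA h1 h2 h3.
have mY := mS _ (meas_img mu _ hU _ mA).
have mY' := mS _ (meas_img mu _ hV _ mA).
have mk := Ai_meas k.
have p1 := meas_pre mu _ hU _ mY; have p2 := meas_pre mu _ hV _ mY.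
have p3 := meas_pre mu _ hV _ mY'.
have p4 := meas_pre mu _ hU _ mk; have p5 := meas_pre mu _ hV _ mk.
have t1 := D_tri mu _ _ _ p1 p2 p3.
have t2 := D_tri mu _ _ _ p1 p4 p2.
have t3 := D_tri mu _ _ _ p4 p5 p2.
rewrite (D_pre mu _ hV _ _ mY mY') iS in t1; try exact: (meas_img mu).
rewrite (D_pre mu _ hU _ _ mY mk) in t2.
rewrite (D_pre mu _ hV _ _ mk mY) (symdC (Ai k)) in t3.
lra.
Qed.
Lemma est_a V (hV : is_ipt mu V) g i j :
  `| m mu (img (conj U T g) (Ai i) `&` Ai j) - m mu (img (conj V T g) (Ai i) `&` Ai j) |
  <= D (img U (Ai i)) (img V (Ai i)) + D (img U (Ai j)) (img V (Ai j)).
Proof.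
have mUi := meas_img mu _ hU _ (Ai_meas i); have mVi := meas_img mu _ hV _ (Ai_meas i).
have mUj := meas_img mu _ hU _ (Ai_meas j); have mVj := meas_img mu _ hV _ (Ai_meas j).
have mY := meas_img mu _ (Tipt2 g) _ mUi; have mY' := meas_img mu _ (Tipt2 g) _ mVi.
rewrite !conj_img (m_swap mu U hU) // (m_swap mu V hV) //.
apply: le_trans (m_absdiff mu _ _ (measurableI _ _ mY mUj) (measurableI _ _ mY' mVj)) _.
apply: le_trans (D_cap mu _ _ _ _ mY mUj mY' mVj) _.
by rewrite (D_img mu _ (Tipt2 g)).
Qed.
End Part2.

Lemma p2_anti {R : realType} (k K : nat) : (k <= K)%N -> (2 ^- K : R) <= 2 ^- k.
Proof.
move=> kK.
have a : 0 < (2:R) ^+ K by apply: exprn_gt0; lra.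
have b : 0 < (2:R) ^+ k by apply: exprn_gt0; lra.
rewrite lef_pV2 ?posrE //; apply: ler_weXn2l => //; lra.
Qed.
Section Final.
Context {R : realType} {d : measure_display} {X : measurableType d}.
Variable mu : probability X R.
Variable Ai : nat -> set X.
Hypothesis Ai_meas : forall i, measurable (Ai i).
Hypothesis Ai_dense : forall A : set X, measurable A -> forall eps : R, 0 < eps ->
      exists i, m mu (symd (Ai i) A) < eps.
Context {G : topologicalType}.
Variable mulG : G -> G -> G.
Variable T : G -> mpt X.
Hypothesis hT : is_action mu mulG T.
Variables (Kidx : set nat) (K : nat -> set G).
Hypothesis K_compact : forall i, Kidx i -> compact (K i).
Hypothesis K_int : forall i, Kidx i -> interior (K i) !=set0.
Variable Gamma : set G.
Local Notation D A B := (m mu (symd A B)).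

Lemma part2 U : is_ipt mu U -> forall eps : R, 0 < eps ->
     exists delta : R, 0 < delta /\
       forall V, is_ipt mu V -> (dA mu Ai U V < delta%:E)%E ->
         (leash mu Ai Kidx K Gamma (conj U T) (conj V T) < eps%:E)%E.
Proof.
move=> hU eps e0.
pose eta := Num.min eps 1 / 80.
have eta0 : 0 < eta by rewrite /eta divr_gt0 // lt_min e0 ltr01.
have etaE : eta * 80 <= eps by rewrite /eta mulfVK // ge_min lexx.
have eta2 : eta <= 1/2.
  have : Num.min eps 1 <= 1 by rewrite ge_min lexx orbT.
  rewrite /eta; lra.
have [N hN] := exists_pow eta eta0.
pose Q1 j K0 g := exists2 k, (k <= K0)%N & D (Y1 Ai T U j g) (Ai k) < eta.
pose Q2 j K0 g := exists2 k, (k <= K0)%N & D (Y2 Ai T U j g) (Ai k) < eta.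
pose P i K0 := Kidx i -> forall j, (j < N)%N -> forall g, K i g -> Q1 j K0 g /\ Q2 j K0 g.
have HP : \forall K0 \near \oo, forall i, (i < N)%N -> P i K0.
  apply: near_forall_lt => i iN.
  have [Ki|nKi] := pselect (Kidx i); last by apply: nearW => K0 /nKi.
  have H : \forall K0 \near \oo, forall j, (j < N)%N -> forall g, K i g -> Q1 j K0 g /\ Q2 j K0 g.
    apply: near_forall_lt => j jN.
    have c1 := compact_net _ _ (fun k g => D (Y1 Ai T U j g) (Ai k) < eta) (K_compact i Ki)
      (fun g0 _ => local_dense mu Ai Ai_meas Ai_dense _ (mY1 mu Ai Ai_meas mulG T hT U hU j)
                     (fun g0 e e0 => near_Y1 mu Ai Ai_meas mulG T hT U hU j g0 e e0) eta eta0 g0).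
    have c2 := compact_net _ _ (fun k g => D (Y2 Ai T U j g) (Ai k) < eta) (K_compact i Ki)
      (fun g0 _ => local_dense mu Ai Ai_meas Ai_dense _ (mY2 mu Ai Ai_meas mulG T hT U hU j)
                     (fun g0 e e0 => near_Y2 mu Ai Ai_meas mulG T hT U hU j g0 e e0) eta eta0 g0).
    by apply: filterS (filterI c1 c2) => K0 [h1 h2] g Kg; split; [exact: h1|exact: h2].
  by apply: filterS H => K0 HK0 _.
case: HP => K1 _ HK1.
pose K0 := maxn K1 N.
have HK0 := HK1 K0 (leq_maxl K1 N).
have NK0 : (N <= K0)%N by exact: leq_maxr.
exists (eta * 2 ^- K0); split; first by rewrite mulr_gt0 // invr_gt0 exprn_gt0.
move=> V hV dUV.
have eV k : (k <= K0)%N ->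
    D (img U (Ai k)) (img V (Ai k)) + D (pre U (Ai k)) (pre V (Ai k)) < eta.
  move=> kK.
  have F0 i : (0 <= ((2 ^- i) * (D (img U (Ai i)) (img V (Ai i))
                          + D (pre U (Ai i)) (pre V (Ai i))))%:E)%E.
    by rewrite lee_fin mulr_ge0 ?p2_ge0 // addr_ge0 // D_ge0.
  have t := term_le_series _ k F0.
  have := le_lt_trans t dUV; rewrite lte_fin => h.
  have pk : 0 < (2:R) ^- k by rewrite invr_gt0 exprn_gt0.
  have h2 : 2 ^- k * (D (img U (Ai k)) (img V (Ai k)) + D (pre U (Ai k)) (pre V (Ai k)))
            < 2 ^- k * eta.
    apply: lt_le_trans h _; have := p2_anti (R:=R) _ _ kK; nra.
  by rewrite ltr_pM2l in h2.
have eV1 k : (k <= K0)%N -> D (img U (Ai k)) (img V (Ai k)) < eta.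
  by move=> kK; have := eV k kK; have := D_ge0 mu (pre U (Ai k)) (pre V (Ai k)); lra.
have eV2 k : (k <= K0)%N -> D (pre U (Ai k)) (pre V (Ai k)) < eta.
  by move=> kK; have := eV k kK; have := D_ge0 mu (img U (Ai k)) (img V (Ai k)); lra.
have ipt W : is_ipt mu W -> forall g, is_ipt mu (conj W T g).
  by move=> hW g; case: (conj_action mu mulG T hT W hW) => h _ _; exact: h.
have Kne i : Kidx i -> K i !=set0.
  by move=> Ki; case: (K_int i Ki) => g Hg; exists g; exact: interior_subset.
have hTg g : is_ipt mu (T g) by exact: (Tipt mu mulG T hT g).
have Hb i g : (i < N)%N -> Kidx i -> K i g ->
    (dA mu Ai (conj U T g) (conj V T g) <= (2 * (8 * eta) + 4 * 2 ^- N)%:E)%E.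
  move=> iN Ki Kg.
  apply: (dA_bound mu Ai Ai_meas _ _ (8 * eta) N (ipt U hU g) (ipt V hV g)); first lra.
  move=> j jN.
  have [[k1 k1K h1] [k2 k2K h2]] := HK0 i iN Ki j jN g Kg.
  have jK : (j <= K0)%N by apply: leq_trans NK0; exact: ltnW.
  have E1 := est_gen mu Ai Ai_meas U hU (img (T g)) (meas_img mu _ (hTg g))
     (D_img mu _ (hTg g)) V hV (Ai j) k1 eta (Ai_meas j) h1 (eV2 k1 k1K) (eV1 j jK).
  have E2 := est_gen mu Ai Ai_meas U hU (pre (T g)) (meas_pre mu _ (hTg g))
     (D_pre mu _ (hTg g)) V hV (Ai j) k2 eta (Ai_meas j) h2 (eV2 k2 k2K) (eV1 j jK).
  rewrite !conj_img !conj_pre; lra.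
have hdG : (dG mu Ai Kidx K (conj U T) (conj V T) <=
            (2 * (2 * (8 * eta) + 4 * 2 ^- N) + 16 * 2 ^- N)%:E)%E.
  apply: (dG_bound mu Ai Ai_meas _ Kidx K _ _ _ N _ Kne (ipt U hU) (ipt V hV) Hb).
  have := p2_ge0 (R:=R) N; lra.
have hsup : (ereal_sup [set aA mu Ai (conj U T g) (conj V T g) | g in Gamma] <=
             (8 * eta + 12 * 2 ^- N)%:E)%E.
  apply: ge_ereal_sup => _ [g Gg <-].
  apply: (aA_bound mu Ai Ai_meas _ _ eta N (ipt U hU g) (ipt V hV g) (ltW eta0) eta2).
  move=> i j iN jN.
  have iK : (i <= K0)%N by apply: leq_trans NK0; exact: ltnW.
  have jK : (j <= K0)%N by apply: leq_trans NK0; exact: ltnW.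
  have := est_a mu Ai Ai_meas mulG T hT U hU V hV g i j.
  have := eV1 i iK; have := eV1 j jK; lra.
rewrite /leash; apply: le_lt_trans (leeD hdG hsup) _.
rewrite -EFinD lte_fin; lra.
Qed.
End Final.
Theorem mainTheorem11
  (R : realType) (d : measure_display) (X : measurableType d)
  (mu : probability X R) (mu_nonatomic : nonatomic mu)
  (Ai : nat -> set X) (Ai_meas : forall i, measurable (Ai i))
  (Ai_gen : <<s range Ai >> = measurable)
  (Ai_dense : forall A : set X, measurable A -> forall eps : R, 0 < eps ->
      exists i, m mu (symd (Ai i) A) < eps)
  (G : topologicalType) (mulG : G -> G -> G) (invG : G -> G) (oneG : G)
  (G_group : is_topological_group mulG invG oneG)
  (G_hausdorff : hausdorff_space G)
  (G_lc : locally_compact [set: G])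
  (G_fc : @first_countable_space G)
  (Kidx : set nat) (K : nat -> set G)
  (K_compact : forall i, Kidx i -> compact (K i))
  (K_int : forall i, Kidx i -> interior (K i) !=set0)
  (K_gen : exists S : set G, S `<=` \bigcup_(i in Kidx) K i /\
             gen_subgroup mulG invG oneG S = setT)
  (Gamma : set G) (Gamma_unbounded : unbounded Gamma)
  (T : G -> mpt X) (T_action : is_action mu mulG T) (T_mixing : mixing mu Gamma T) :
  (forall U, is_ipt mu U ->
     is_action mu mulG (conj U T) /\ mixing mu Gamma (conj U T)) /\
  (forall U, is_ipt mu U -> forall eps : R, 0 < eps ->
     exists delta : R, 0 < delta /\
       forall V, is_ipt mu V -> (dA mu Ai U V < delta%:E)%E ->
         (leash mu Ai Kidx K Gamma (conj U T) (conj V T) < eps%:E)%E).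
Proof.
split.
- move=> U hU; split.
  + exact: (conj_action mu mulG T T_action U hU).
  + exact: (conj_mixing mu mulG T T_action U Gamma hU T_mixing).
- move=> U hU eps e0.
  exact: (part2 mu Ai Ai_meas Ai_dense mulG T T_action Kidx K K_compact K_int Gamma U hU eps e0).
Qed.
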